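(* Let $\varphi$ be the endomorphism of the free group $F_2$ on $\{a,b\}$ defined by $a\varphi=a^2$ and $b\varphi=a^2b^2a^{-2}$. Then $\varphi$ is an almost strictly length-increasing monomorphism of $F_2$ which is not length-increasing.
   Context: Elements of a free group are identified with reduced words and $|u|$ is the length of the reduced word $u$; maps are written on the right. An endomorphism $\varphi$ of $F_n$ is length-increasing if $|u\varphi|\geq|u|$ for all $u\in F_n$, and almost strictly length-increasing if $|u\varphi|\leq|u|$ for only finitely many $u\in F_n$. *)

(* Defs.v *)
(* (seq). Free group F_2 on {a, b} modelled as reduced words. *)
From mathcomp Require Import all_boot.
Set Implicit Arguments. Unset Strict Implicit. Unset Printing Implicit Defensive.

(* A letter is (generator, exponent sign): generator false = a, true = b;
   sign true = +1, false = -1. *)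
Definition letter := (bool * bool)%type.
Definition a_ : letter := (false, true).
Definition A_ : letter := (false, false).
Definition b_ : letter := (true, true).
Definition B_ : letter := (true, false).

Definition inv_letter (x : letter) : letter := (x.1, ~~ x.2).

Definition reduced (w : seq letter) : bool :=
  sorted (fun x y => y != inv_letter x) w.

Definition push (x : letter) (w : seq letter) : seq letter :=
  match w with
  | y :: w' => if y == inv_letter x then w' else x :: w
  | [::] => [:: x]
  end.
Definition reduce (w : seq letter) : seq letter := foldr push [::] w.

Definition inv_word (w : seq letter) : seq letter := rev (map inv_letter w).

Definition wlen (u : seq letter) : nat := size u.

Definition img_letter (ia ib : seq letter) (x : letter) : seq letter :=
  let g := if x.1 then ib else ia in if x.2 then g else inv_word g.
Definition endo (ia ib : seq letter) (u : seq letter) : seq letter :=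
  reduce (flatten (map (img_letter ia ib) u)).

Definition phi : seq letter -> seq letter :=
  endo [:: a_; a_] [:: a_; a_; b_; b_; A_; A_].

Definition mono_on_F2 (f : seq letter -> seq letter) : Prop :=
  forall u v, reduced u -> reduced v -> f u = f v -> u = v.

Definition length_increasing (f : seq letter -> seq letter) : Prop :=
  forall u, reduced u -> wlen u <= wlen (f u).

(* |u f| <= |u| for only finitely many u in F_2. *)
Definition almost_strictly_length_increasing (f : seq letter -> seq letter) : Prop :=
  exists s : seq (seq letter),
    forall u, reduced u -> wlen (f u) <= wlen u -> u \in s.

(* Main.v *)
Require Import Defs.
From mathcomp Require Import all_boot.
From mathcomp Require Import zify.
Set Implicit Arguments. Unset Strict Implicit.

Lemma inv_inv x : inv_letter (inv_letter x) = x.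
Proof. by case: x => [[] []]. Qed.

Lemma reduced_cons2 x y w :
  reduced [:: x, y & w] = (y != inv_letter x) && reduced (y :: w).
Proof. by []. Qed.

Lemma reduced_tail x w : reduced (x :: w) -> reduced w.
Proof. by case: w => // y w /andP[]. Qed.

Lemma push_reduced x w : reduced w -> reduced (push x w).
Proof.
case: w => [|y w] //= Hw.
case: eqP => [_|ne]; first exact: (reduced_tail Hw).
rewrite reduced_cons2; apply/andP; split=> //. by apply/eqP=> E; apply: ne; rewrite E.
Qed.

Lemma push_inv x w : reduced w -> push (inv_letter x) (push x w) = w.
Proof.
case: w => [|y w] Hw /=; first by rewrite inv_inv eqxx.
case: (eqVneq y (inv_letter x)) => [Ey|ne].
  subst y. case: w Hw => [|z w] Hw //=.
  move: Hw; rewrite reduced_cons2 => /andP[nz _].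
  by rewrite (negbTE nz).
by rewrite /= inv_inv eqxx.
Qed.

Definition act (w Z : seq letter) := foldr push Z w.

Lemma act_reduced w Z : reduced Z -> reduced (act w Z).
Proof. by move=> HZ; elim: w => //= x w IH; apply: push_reduced. Qed.

Lemma act_cat w1 w2 Z : act (w1 ++ w2) Z = act w1 (act w2 Z).
Proof. exact: foldr_cat. Qed.

Lemma act_push x r Z : reduced Z -> reduced r ->
  push x (act r Z) = act (push x r) Z.
Proof.
move=> HZ; case: r => [|y r] //= Hr.
case: eqP => [Ey|//]. subst y.
have := push_inv (inv_letter x) (act_reduced r HZ). by rewrite inv_inv.
Qed.

Lemma act_reduce w Z : reduced Z -> act w Z = act (act w [::]) Z.
Proof.
move=> HZ; elim: w => //= x w IH.
by rewrite IH act_push // act_reduced.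
Qed.

Lemma act_nil_reduced d : reduced d -> act d [::] = d.
Proof.
elim: d => //= x d IH Hd. rewrite IH ?(reduced_tail Hd) //.
case: d Hd {IH} => // y d Hd.
have /andP[ne _] : (y != inv_letter x) && reduced (y::d) by exact: Hd.
rewrite /=.
by rewrite (negbTE ne).
Qed.

Lemma size_push x w : size (push x w) <= (size w).+1.
Proof. case: w => //= y w; case: eqP => //= _. exact: leqW. Qed.


Lemma size_act w Z : size (act w Z) <= size w + size Z.
Proof.
elim: w => //= x w IH. apply: leq_trans (size_push _ _) _. by rewrite addSn ltnS.
Qed.

Fixpoint dbl (u : seq letter) : seq letter :=
  if u is x :: u' then x :: x :: dbl u' else [::].

Lemma size_dbl u : size (dbl u) = (size u).*2.
Proof. by elim: u => //= x u ->; rewrite doubleS. Qed.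

Lemma dbl_reduced u : reduced u -> reduced (dbl u).
Proof.
elim: u => // x u IH Hu.
have Hd := IH (reduced_tail Hu).
have nx : x != inv_letter x by case: x {Hu} => [[] []].
case: u Hu IH Hd => [|y u] Hu IH Hd; first by rewrite /= nx.
move: Hu; rewrite reduced_cons2 => /andP[ne _].
change ((x != inv_letter x) && ((y != inv_letter x) && reduced (dbl (y :: u)))).
by rewrite nx ne.
Qed.

Lemma dbl_inj u v : dbl u = dbl v -> u = v.
Proof.
elim: u v => [|x u IH] [|y v] //= [-> _ E]. by rewrite (IH _ E).
Qed.

Definition T Z := push a_ (push a_ Z).
Definition T' Z := push A_ (push A_ Z).

Lemma TT' Z : reduced Z -> T (T' Z) = Z.
Proof.
move=> HZ. rewrite /T /T'.
have R1 := push_reduced A_ HZ.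
rewrite (push_inv A_ R1). exact: (push_inv A_ HZ).
Qed.

Lemma T'T Z : reduced Z -> T' (T Z) = Z.
Proof.
move=> HZ. rewrite /T /T'.
have R1 := push_reduced a_ HZ.
rewrite (push_inv a_ R1). exact: (push_inv a_ HZ).
Qed.

Definition ia := [:: a_; a_].
Definition ib := [:: a_; a_; b_; b_; A_; A_].

Lemma imgE x : img_letter ia ib x = if x.1 then [:: a_; a_; x; x; A_; A_] else [:: x; x].
Proof. by case: x => [[] []]. Qed.

Lemma decomp u w : reduced w ->
  act (flatten (map (img_letter ia ib) u)) w = T (act (dbl u) (T' w)).
Proof.
move=> Hw; elim: u => [|x u IH] /=; first by rewrite TT'.
rewrite act_cat IH.
set Y := act (dbl u) (T' w).
have HY : reduced Y by apply: act_reduced; rewrite /T'; do 2 apply: push_reduced.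
rewrite imgE; case: x => [[] []] /=.
- rewrite -/(T' (T Y)) T'T //.
- rewrite -/(T' (T Y)) T'T //.
- by [].
- rewrite -/(T' (T Y)) T'T //. rewrite -/(T (T' Y)) TT' //.
Qed.

Lemma phiE u : phi u = T (act (dbl u) [:: A_; A_]).
Proof. rewrite /phi /endo /reduce -/(act _ [::]) decomp //. Qed.


Lemma dblE u : reduced u -> act (act (dbl u) [:: A_; A_]) [:: a_; a_] = dbl u.
Proof.
move=> Hu.
have -> : act (dbl u) [:: A_; A_] = act (dbl u ++ [:: A_; A_]) [::] by rewrite act_cat.
rewrite -act_reduce // act_cat.
have -> : act [:: A_; A_] [:: a_; a_] = [::] by [].
exact/act_nil_reduced/dbl_reduced.
Qed.

Lemma len_bound u : reduced u -> (size u).*2 <= size (phi u) + 4.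
Proof.
move=> Hu. rewrite -size_dbl -(dblE Hu).
set X := act (dbl u) [:: A_; A_].
have HX : reduced X by apply: act_reduced.
have EX : X = act [:: A_; A_] (phi u) by rewrite phiE -/X; rewrite /act /= -/(T' (T X)) T'T.
apply: leq_trans (size_act _ _) _. rewrite /= EX.
have := size_act [:: A_; A_] (phi u). rewrite /=. lia.
Qed.

Fixpoint allw n : seq (seq letter) :=
  if n is m.+1 then [::] :: [seq x :: w | x <- enum {: bool * bool}, w <- allw m] else [:: [::]].

Lemma allwP n u : size u <= n -> u \in allw n.
Proof.
elim: n u => [|n IH] [|x u] //=.
rewrite ltnS => Hs. rewrite in_cons; apply/orP; right.
apply: (allpairs_f (fun x w => x :: w)); [exact: mem_enum | exact: IH].
Qed.

Theorem mainTheorem7 :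
  mono_on_F2 phi /\ almost_strictly_length_increasing phi /\ ~ length_increasing phi.
Proof.
split; [|split].
- move=> u v Hu Hv E. apply: dbl_inj. rewrite -(dblE Hu) -(dblE Hv).
  move: E; rewrite !phiE => E.
  have := congr1 T' E. rewrite !T'T ?act_reduced // => ->. by [].
- exists (allw 4) => u Hu Hle. apply: allwP.
  have := len_bound Hu. rewrite -addnn. rewrite /wlen in Hle. move=> H2. have := leq_trans H2 (leq_add Hle (leqnn 4)). by rewrite leq_add2l.
- move=> H. by have := H [:: A_; b_; a_] isT.
Qed.
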